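(* Let $\mathcal{C}$ be a set of node-disjoint chains and $T$ a time function for $\mathcal{C}$, and let $G=\mathcal{G}^{\mathcal{C},T}_{\mathrm{perf}}$. Then for every set $\mathcal{C}'$ of node-disjoint chains with $\bigcup_{C\in\mathcal{C}'}V(C)=V(G)$ having the same set of sources as $\mathcal{C}$, and every time function $T'$ for $\mathcal{C}'$ such that $G\in\mathcal{G}^{\mathcal{C}',T'}$, we have $T'(v)=T(v)$ for all $v\in V(G)$.
   Context: A chain is a directed path graph with source (start node) and sink (end node); for a non-sink $v$, $v+1$ is its out-neighbor in the chain. For node-disjoint chains $\mathcal{C}=\{C_1,\ldots,C_m\}$, $V=\bigcup_iV(C_i)$, $\gamma=|V|-m+1$, a time function is $T:V\to\{1,\ldots,\gamma\}$ with (1) $T(v)=1$ for every source; (2) distinct non-source nodes get distinct values; (3) $T(v)<T(v+1)$ for non-sink $v$. $T_{\max}(v)=\gamma$ for a sink $v$, else $T_{\max}(v)=T(v+1)-1$. $\mathcal{G}^{\mathcal{C},T}$ is the set of directed graphs $G$ (self-loops allowed) with $V(G)=V$, $\bigcup_iE(C_i)\subseteq E(G)$, and $(u,v)\notin E(G)$ whenever $(u,v)\notin\bigcup_iE(C_i)$ and $T_{\max}(u)<T(v)$. The perfect $(\mathcal{C},T)$-constructed graph $\mathcal{G}^{\mathcal{C},T}_{\mathrm{perf}}$ is the graph with node set $V$ and edge set $E_{\mathrm{perf}}=\bigcup_iE(C_i)\cup\{(u,v)\in V\times V: T_{\max}(u)\geq T(v)\}$. *)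

(* Defs.v *)
From mathcomp Require Import all_boot.
Set Implicit Arguments. Unset Strict Implicit. Unset Printing Implicit Defensive.

Section Chains.
Variable V : finType.

(* A family of chains is a list of chains; each chain is the (nonempty)
   sequence of its nodes from source to sink. *)
Definition chain_family (C : seq (seq V)) : bool :=
  all (fun c => c != [::]) C && uniq (flatten C).

Definition covers (C : seq (seq V)) : Prop := forall v : V, v \in flatten C.

(* (u, v) is an edge of some chain, i.e. v = u + 1 *)
Definition chain_edge (C : seq (seq V)) (u v : V) : bool :=
  has (fun c => (u, v) \in zip c (behead c)) C.

Definition is_source (C : seq (seq V)) (v : V) : bool :=
  has (fun c => ohead c == Some v) C.

Definition olast (c : seq V) : option V :=
  if c is x :: s then Some (last x s) else None.

Definition is_sink (C : seq (seq V)) (v : V) : bool :=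
  has (fun c => olast c == Some v) C.

Definition gamma (C : seq (seq V)) : nat := #|V| - size C + 1.

Definition time_function (C : seq (seq V)) (T : V -> nat) : Prop :=
  (forall v, 1 <= T v <= gamma C) /\
  (forall v, is_source C v -> T v = 1) /\
  (forall u v, ~~ is_source C u -> ~~ is_source C v -> u != v -> T u != T v) /\
  (forall u v, chain_edge C u v -> T u < T v).

Definition Tmax (C : seq (seq V)) (T : V -> nat) (v : V) : nat :=
  if is_sink C v then gamma C
  else match [pick w | chain_edge C v w] with
       | Some w => (T w).-1
       | None => gamma C
       end.

(* G (given by its edge relation on V, self-loops allowed) lies in G^{C,T} *)
Definition in_GCT (C : seq (seq V)) (T : V -> nat) (E : rel V) : Prop :=
  (forall u v, chain_edge C u v -> E u v) /\
  (forall u v, ~~ chain_edge C u v -> Tmax C T u < T v -> ~~ E u v).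

Definition perf_graph (C : seq (seq V)) (T : V -> nat) : rel V :=
  fun u v => chain_edge C u v || (T v <= Tmax C T u).

End Chains.

(* Main.v *)
Require Import Defs.
From mathcomp Require Import all_boot zify.
Set Implicit Arguments. Unset Strict Implicit. Unset Printing Implicit Defensive.

Section Seqs.
Variable V : finType.
Implicit Types (s c : seq V) (C : seq (seq V)).

Lemma zipb_mem s u v : (u, v) \in zip s (behead s) -> (u \in s) /\ (v \in behead s).
Proof.
elim: s => [|a s IH] //=; case: s IH => [|b r] IH //=.
rewrite in_cons => /orP [/eqP [-> ->]|/IH [H1 H2]].
  by split; rewrite ?in_cons ?eqxx.
split; first by rewrite in_cons H1 orbT.
by move: H2 => /= H2; rewrite /= ?in_cons ?H2 ?orbT.
Qed.

Lemma zipb_cons a s : {subset zip s (behead s) <= zip (a :: s) (behead (a :: s))}.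
Proof. by case: s => [|b r] //= p; rewrite in_cons => ->; rewrite orbT. Qed.

Lemma zipb_catl s t : {subset zip s (behead s) <= zip (s ++ t) (behead (s ++ t))}.
Proof.
elim: s => [|a s IH] //=; case: s IH => [|b r] IH //= p.
rewrite !in_cons => /orP [->//|/IH H]; by rewrite H orbT.
Qed.

Lemma zipb_catr s t : {subset zip t (behead t) <= zip (s ++ t) (behead (s ++ t))}.
Proof.
elim: s => [|a s IH] //= p /IH H; exact: zipb_cons.
Qed.

Lemma zipb_fun s u v w : uniq s -> (u, v) \in zip s (behead s) ->
  (u, w) \in zip s (behead s) -> v = w.
Proof.
elim: s => [|a s IH] //=; case: s IH => [|b r] IH //= /andP [na us].
rewrite !in_cons => /orP [/eqP [Hu Hv]|H1] /orP [/eqP [Hu' Hw]|H2].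
- by rewrite Hv Hw.
- by have [H _] := zipb_mem H2; rewrite -Hu H in na.
- by have [H _] := zipb_mem H1; move: na; rewrite -Hu' H.
- exact: IH.
Qed.

Lemma zipb_inj s u v w : uniq s -> (u, w) \in zip s (behead s) ->
  (v, w) \in zip s (behead s) -> u = v.
Proof.
elim: s => [|a s IH] //=; case: s IH => [|b r] IH //= /andP [na us].
rewrite !in_cons => /orP [/eqP [Hu Hw]|H1] /orP [/eqP [Hv Hw']|H2].
- by rewrite Hu Hv.
- have [_ H] := zipb_mem H2; move: us => /= /andP [nb _]; by rewrite -Hw H in nb.
- have [_ H] := zipb_mem H1; move: us => /= /andP [nb _].
  by rewrite -Hw' H in nb.
- exact: IH.
Qed.

Lemma zipb_pred s w : w \in s -> ohead s != Some w ->
  exists u, (u, w) \in zip s (behead s).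
Proof.
elim: s => [|a s IH] //=; rewrite in_cons => /orP [/eqP ->|ws]; first by rewrite eqxx.
move=> _; case: s IH ws => [|b r] IH //= ws.
case: (eqVneq w b) => [->|nb]; first by exists a; rewrite in_cons eqxx.
have [u Hu] : exists u, (u, w) \in zip (b :: r) r.
  by apply: IH ws _; rewrite /= eq_sym (inj_eq (@Some_inj _)) nb.
by exists u; rewrite in_cons Hu orbT.
Qed.

Lemma zipb_succ s u : u \in s -> olast s != Some u ->
  exists w, (u, w) \in zip s (behead s).
Proof.
elim: s => [|a s IH] //=; case: s IH => [|b r] IH /=.
  by rewrite in_cons orbF => /eqP ->; rewrite eqxx.
rewrite in_cons => /orP [/eqP ->|us] nl; first by exists b; rewrite in_cons eqxx.
by have [w Hw] := IH us nl; exists w; rewrite in_cons Hw orbT.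
Qed.

Lemma zipb_notlast s u w : uniq s -> (u, w) \in zip s (behead s) -> olast s != Some u.
Proof.
elim: s => [|a s IH] //=; case: s IH => [|b r] IH //= /andP [na us].
rewrite in_cons => /orP [/eqP [-> _]|H].
  apply/negP => /eqP [Hl]; move: na; by rewrite -Hl mem_last.
exact: IH.
Qed.



Lemma ce_zip C u v : chain_edge C u v ->
  (u, v) \in zip (flatten C) (behead (flatten C)).
Proof.
elim: C => [|c C IH] //=; rewrite /chain_edge /= => /orP [H|H].
  exact: zipb_catl.
by apply: zipb_catr; apply: IH.
Qed.

Lemma ce_fun C u v w : uniq (flatten C) -> chain_edge C u v -> chain_edge C u w -> v = w.
Proof. by move=> U /ce_zip H1 /ce_zip H2; apply: zipb_fun H1 H2. Qed.

Lemma ce_inj C u v w : uniq (flatten C) -> chain_edge C u w -> chain_edge C v w -> u = v.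
Proof. by move=> U /ce_zip H1 /ce_zip H2; apply: zipb_inj H1 H2. Qed.

Lemma ce_pred C w : covers C -> ~~ is_source C w -> exists u, chain_edge C u w.
Proof.
move=> cov ns; have /flattenP [c cC wc] := cov w.
have nh : ohead c != Some w by move: ns => /hasPn /(_ c cC).
have [u Hu] := zipb_pred wc nh; exists u; apply/hasP; by exists c.
Qed.

Lemma ce_succ C u : covers C -> ~~ is_sink C u -> exists w, chain_edge C u w.
Proof.
move=> cov ns; have /flattenP [c cC uc] := cov u.
have nh : olast c != Some u by move: ns => /hasPn /(_ c cC).
have [w Hw] := zipb_succ uc nh; exists w; apply/hasP; by exists c.
Qed.

Lemma uniq_in C c : c \in C -> uniq (flatten C) -> uniq c.
Proof.
elim: C => [|d D IH] //=; rewrite in_cons cat_uniq => /orP [/eqP ->|cD] /and3P [Ud _ UD].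
  by [].
exact: IH.
Qed.

Lemma same_chain C c1 c2 x : uniq (flatten C) -> c1 \in C -> c2 \in C ->
  x \in c1 -> x \in c2 -> c1 = c2.
Proof.
elim: C => [|d D IH] //=; rewrite cat_uniq => /and3P [_ nh UD].
have F : forall c, c \in D -> x \in c -> x \in d -> False.
  move=> c cD xc xd; move/hasP: nh; apply; exists x => //.
  by apply/flattenP; exists c.
rewrite !in_cons => /orP [/eqP ->|c1D] /orP [/eqP ->|c2D] // x1 x2.
- by case: (F _ c2D x2 x1).
- by case: (F _ c1D x1 x2).
- exact: IH.
Qed.

Lemma ce_nsink C u w : uniq (flatten C) -> chain_edge C u w -> ~~ is_sink C u.
Proof.
move=> U /hasP [c cC H]; apply/hasP => [[c' c'C /eqP Hl]].
have uc' : u \in c'.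
  case: c' Hl {c'C} => [|a r] //= [<-]; exact: mem_last.
have [uc _] := zipb_mem H.
have E := same_chain U cC c'C uc uc'; subst c'.
by move: (zipb_notlast (uniq_in cC U) H); rewrite Hl eqxx.
Qed.

Lemma src_pmap C v : is_source C v = (v \in pmap ohead C).
Proof. by rewrite mem_pmap -has_pred1 has_map. Qed.

Lemma pmap_flatten C x : x \in pmap ohead C -> x \in flatten C.
Proof.
elim: C => [|c C IH] //=; case: c => [|a r] /=; first by move/IH.
rewrite !in_cons => /orP [->//|/IH H]; by rewrite mem_cat H !orbT.
Qed.

Lemma uniq_heads C : uniq (flatten C) -> uniq (pmap ohead C).
Proof.
elim: C => [|c C IH] //=; rewrite cat_uniq => /and3P [_ nh UD].
case: c nh => [|a r] /= nh; first exact: IH.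
rewrite IH // andbT; apply/negP => /pmap_flatten H.
by move/hasP: nh; apply; exists a; rewrite ?in_cons ?eqxx.
Qed.

Lemma card_src C : chain_family C -> #|[set v | is_source C v]| = size C.
Proof.
move=> /andP [ne U].
have -> : [set v | is_source C v] = [set v in pmap ohead C].
  by apply/setP => v; rewrite !inE src_pmap.
rewrite cardsE; move/card_uniqP: (uniq_heads U) => ->.
rewrite size_pmap -(count_predT C); apply: eq_in_count => c /(allP ne).
by case: c.
Qed.

Section TimeF.
Variables (C : seq (seq V)) (T : V -> nat).
Hypotheses (hC : chain_family C) (hcov : covers C) (hT : time_function C T).

Let U : uniq (flatten C). Proof. by case/andP: hC. Qed.

Lemma T_range v : 1 <= T v <= gamma C.
Proof. by case: hT => H _; apply: H. Qed.

Lemma ce_lt u v : chain_edge C u v -> T u < T v.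
Proof. by case: hT => _ [_ [_ H]]; apply: H. Qed.

Lemma ce_nsrc u w : chain_edge C u w -> ~~ is_source C w.
Proof.
move=> H; apply/negP => S; have := ce_lt H.
case: hT => _ [Hs _]; rewrite (Hs _ S); have := T_range u; lia.
Qed.

Lemma T_ge2 v : ~~ is_source C v -> 2 <= T v.
Proof. move=> /(ce_pred hcov) [u /ce_lt]; have := T_range u; lia. Qed.

Lemma T_inj u v : ~~ is_source C u -> ~~ is_source C v -> T u = T v -> u = v.
Proof.
move=> nu nv E; case: (eqVneq u v) => // ne.
by case: hT => _ [_ [H _]]; move: (H u v nu nv ne); rewrite E eqxx.
Qed.

Lemma card_ns : #|[set v | ~~ is_source C v]| = (gamma C).-1.
Proof.
have := cardsC [set v | is_source C v]; rewrite card_src //.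
have -> : ~: [set v | is_source C v] = [set v | ~~ is_source C v].
  by apply/setP => v; rewrite !inE.
rewrite /gamma; lia.
Qed.

Lemma T_surj k : 2 <= k <= gamma C -> exists v, ~~ is_source C v /\ T v = k.
Proof.
move=> Hk; set NS := [set v | ~~ is_source C v].
have Us : uniq (map T (enum NS)).
  rewrite map_inj_in_uniq ?enum_uniq // => x y.
  rewrite !mem_enum !inE => nx ny; exact: T_inj.
have sub : {subset map T (enum NS) <= iota 2 (gamma C).-1}.
  move=> t /mapP [v]; rewrite mem_enum inE => nv ->.
  rewrite mem_iota; have := T_ge2 nv; have := T_range v; lia.
have sz : size (iota 2 (gamma C).-1) <= size (map T (enum NS)).
  by rewrite size_map -cardE card_ns size_iota.
have [_ E] := uniq_min_size Us sub sz.
have : k \in iota 2 (gamma C).-1 by rewrite mem_iota; lia.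
rewrite -E => /mapP [v]; rewrite mem_enum inE => nv ->; by exists v.
Qed.

Lemma card_below t : 2 <= t <= (gamma C).+1 ->
  #|[set y | ~~ is_source C y & T y < t]| = t - 2.
Proof.
move=> Ht; set B := [set y | ~~ is_source C y & T y < t].
have Us : uniq (map T (enum B)).
  rewrite map_inj_in_uniq ?enum_uniq // => x y.
  rewrite !mem_enum !inE => /andP [nx _] /andP [ny _]; exact: T_inj.
have E : map T (enum B) =i iota 2 (t - 2).
  move=> k; rewrite mem_iota; apply/mapP/idP.
    move=> [v]; rewrite mem_enum inE => /andP [nv lt] ->.
    have := T_ge2 nv; lia.
  move=> Hk; have [|v [nv Tv]] := T_surj (k := k); first lia.
  exists v => //; rewrite mem_enum inE nv Tv; lia.
have := perm_size (uniq_perm Us (iota_uniq 2 (t - 2)) E).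
by rewrite size_map -cardE size_iota.
Qed.

Lemma Tmax_sink u : is_sink C u -> Tmax C T u = gamma C.
Proof. by rewrite /Tmax => ->. Qed.

Lemma Tmax_edge u w : chain_edge C u w -> Tmax C T u = (T w).-1.
Proof.
move=> H; rewrite /Tmax (negbTE (ce_nsink U H)).
case: pickP => [w' H'|H0]; first by rewrite (ce_fun U H' H).
by move: (H0 w); rewrite H.
Qed.

Lemma key x : ~~ is_source C x ->
  #|[set u | ~~ perf_graph C T u x]| = T x - 2.
Proof.
move=> nx; set A := [set u | ~~ perf_graph C T u x].
pose f u := odflt x [pick w | chain_edge C u w].
have fE u w : chain_edge C u w -> f u = w.
  move=> H; rewrite /f; case: pickP => [w' H'|H0] /=; first exact: (ce_fun U H' H).
  by move: (H0 w); rewrite H.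
have Tx := T_range x.
have inA u : u \in A -> exists w, chain_edge C u w /\ ~~ is_source C w /\ T w < T x.
  rewrite inE /perf_graph negb_or => /andP [nce nle].
  case: (boolP (is_sink C u)) => [S|nS].
    by move: nle; rewrite Tmax_sink // -ltnNge; lia.
  have [w Hw] := ce_succ hcov nS; exists w; split => //.
  have nw := ce_nsrc Hw; split => //.
  move: nle; rewrite (Tmax_edge Hw) -ltnNge => lt.
  have : T w != T x.
    apply/negP => /eqP /(T_inj nw nx) E; by rewrite -E Hw in nce.
  move=> /eqP ne; have := T_ge2 nw; move: lt; case: (T w) ne => // n ne /=; lia.
have -> : T x - 2 = #|[set y | ~~ is_source C y & T y < T x]|.
  by rewrite card_below //; have := T_ge2 nx; lia.
suff -> : [set y | ~~ is_source C y & T y < T x] = f @: A.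
  rewrite card_in_imset //.
  move=> u1 u2 A1 A2 E.
  have [w1 [H1 _]] := inA u1 A1; have [w2 [H2 _]] := inA u2 A2.
  move: E; rewrite (fE _ _ H1) (fE _ _ H2) => E; subst w2.
  exact: (ce_inj U H1 H2).
apply/setP => y; apply/idP/imsetP; last first.
    move=> [u uA ->]; have [w [Hw [nw lt]]] := inA u uA.
    by rewrite (fE _ _ Hw) inE nw lt.
  rewrite inE => /andP [ny lt]; have [u Hu] := ce_pred hcov ny.
  exists u; last by rewrite (fE _ _ Hu).
  rewrite inE /perf_graph negb_or (Tmax_edge Hu); apply/andP; split.
    apply/negP => H; have E := ce_fun U Hu H; subst y; by rewrite ltnn in lt.
  rewrite -ltnNge; lia.
Qed.

End TimeF.
End Seqs.

Theorem proposition2 (V : finType) (C : seq (seq V)) (T : V -> nat)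
  (hC : chain_family C) (hCcov : covers C) (hT : time_function C T)
  (C' : seq (seq V)) (T' : V -> nat)
  (hC' : chain_family C') (hC'cov : covers C')
  (hsrc : forall v, is_source C' v = is_source C v)
  (hT' : time_function C' T')
  (hG : in_GCT C' T' (perf_graph C T)) :
  forall v : V, T' v = T v.
Proof.
have ineq x : ~~ is_source C x -> T' x <= T x.
  move=> nx; have nx' : ~~ is_source C' x by rewrite hsrc.
  have := key hC hCcov hT nx; have := key hC' hC'cov hT' nx'.
  have sub : [set u | ~~ perf_graph C' T' u x] \subset [set u | ~~ perf_graph C T u x].
    apply/subsetP => u; rewrite !inE {1}/perf_graph negb_or -ltnNge => /andP [nce lt].
    by case: hG => _ H; apply: H.
  have := subset_leq_card sub => le E1 E2; rewrite E1 E2 in le.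
  by rewrite leq_sub2rE ?(T_ge2 hC hCcov hT nx) in le.
suff H : forall n x, T x = n -> T' x = T x by move=> v; exact: H.
elim/ltn_ind => n IH x Tx.
case: (boolP (is_source C x)) => [S|nx].
  case: hT => _ [H _]; case: hT' => _ [H' _].
  by rewrite (H _ S) H' // hsrc.
have le := ineq x nx; case: (ltngtP (T' x) (T x)) le => // lt _.
have nx' : ~~ is_source C' x by rewrite hsrc.
have g2 := T_ge2 hC' hC'cov hT' nx'.
have rg := T_range hT x.
have [|y [ny Ty]] := T_surj hC hCcov hT (k := T' x); first lia.
have lty : T y < n by rewrite -Tx Ty.
have Ey := IH (T y) lty y erefl.
have ne : y != x by apply/negP => /eqP E; subst y; lia.
case: hT' => _ [_ [Hi _]].
by move: (Hi y x); rewrite !hsrc ny nx ne Ey Ty eqxx => /(_ isT isT isT).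
Qed.
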